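(* Let $X=\{0,1,2,3\}$, $s_1=(0\,3\,2)$, $s_2=(0\,1\,3)$, $s_3=s_2^{-1}=(0\,3\,1)$, $A=\langle s_1,s_2,s_3\rangle\cong\mathrm{Alt}(4)$, and let $b\in\mathrm{St}(1)$ be the automorphism of $X^*$ with $b|_0=b$, $b|_1=s_1$, $b|_2=s_2$, $b|_3=s_3$; let $B=\langle b\rangle$ (of order $3$) and $G=\langle A\cup B\rangle$. Then for each $b'\in\{b,b^2\}$ the map $\lambda_{b'}:A\to A$ is eventually trivial (for every $a\in A$ some iterate $\lambda_{b'}^n(a)$ equals $1_A$), but the element $g=s_3s_1bs_3b$ has infinite order; in particular $G$ is not periodic.
   Context: $X^*$ is the free monoid on $X$ viewed as a rooted tree; $\mathrm{Aut}(X^* )$ acts on the right ($gh$ = first $g$ then $h$, so permutations compose left to right); sections $g|_u$ are defined by $(u\star v).g=u.g\star v.(g|_u)$; permutations of $X$ act as rooted automorphisms $(x\star v).\rho=x.\rho\star v$; $\mathrm{St}(1)$ is the first layer stabiliser. For $a\in A$ let $\ell_a(0)$ be the length of the $\langle a\rangle$-orbit of $0$, and for $b'\in B$ let $\lambda_{b'}(a)=b'|_{0.a}\,b'|_{0.a^2}\cdots b'|_{0.a^{\ell_a(0)-1}}$. *)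

(* Defs.v *)
From mathcomp Require Import all_boot all_order all_fingroup.
Set Implicit Arguments. Unset Strict Implicit. Unset Printing Implicit Defensive.
Import GroupScope.

Notation X := 'I_4.
Definition x0 : X := inord 0.
Definition x1 : X := inord 1.
Definition x2 : X := inord 2.
Definition x3 : X := inord 3.

(* Maps on X^* (tree automorphisms are represented as functions on words). *)
Definition tmap := seq X -> seq X.

(* Right-action product: (comp_r g h) = "first g then h" = g h. *)
Definition comp_r (g h : tmap) : tmap := fun w => h (g w).

(* Section g|_u : (u ++ v).g = u.g ++ v.(g|_u). *)
Definition section (g : tmap) (u : seq X) : tmap :=
  fun v => drop (size u) (g (u ++ v)).

(* Rooted automorphism of a permutation: (x v).rho = (x.rho) v.
   mathcomp's perm product is left to right: (p * q) x = q (p x). *)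
Definition rooted (r : {perm X}) : tmap :=
  fun w => if w is x :: v then r x :: v else [::].

Definition letter_map (g : tmap) : X -> X := fun x => head x (g [:: x]).

Definition s1f (i : X) : X :=
  inord (match val i with 0 => 3 | 3 => 2 | 2 => 0 | k => k end).
Definition s2f (i : X) : X :=
  inord (match val i with 0 => 1 | 1 => 3 | 3 => 0 | k => k end).

Lemma s1f_inj : injective s1f.
Proof.
move=> [[|[|[|[|i]]]] Hi] [[|[|[|[|j]]]] Hj] //;
  rewrite /s1f /= => /(congr1 val); rewrite /= !inordK //; try by apply: val_inj.
all: by move=> _; apply: val_inj.
Qed.
Lemma s2f_inj : injective s2f.
Proof.
move=> [[|[|[|[|i]]]] Hi] [[|[|[|[|j]]]] Hj] //;
  rewrite /s2f /= => /(congr1 val); rewrite /= !inordK //; try by apply: val_inj.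
all: by move=> _; apply: val_inj.
Qed.

Definition s1 : {perm X} := perm s1f_inj.
Definition s2 : {perm X} := perm s2f_inj.
Definition s3 : {perm X} := s2^-1.

Definition A : {set {perm X}} := <<[set s1; s2; s3]>>.

Definition sel (x : X) : {perm X} :=
  if x == x1 then s1 else if x == x2 then s2 else s3.

Fixpoint bmap (w : seq X) : seq X :=
  match w with
  | [::] => [::]
  | x :: v => x :: (if x == x0 then bmap v else rooted (sel x) v)
  end.

(* lambda_{b'}(a) = b'|_{0.a} b'|_{0.a^2} ... b'|_{0.a^{l-1}},
   l = length of the <a>-orbit of 0. *)
Definition lambda (b' : tmap) (a : tmap) : tmap :=
  let f := letter_map a in
  let l := fingraph.order f x0 in
  foldl (fun acc i => comp_r acc (section b' [:: iter i f x0])) id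
        (iota 1 l.-1).

Definition gmap : tmap :=
  comp_r (comp_r (comp_r (comp_r (rooted s3) (rooted s1)) bmap) (rooted s3)) bmap.

(* Main.v *)
Require Import Defs.
From mathcomp Require Import all_boot all_order all_fingroup.
From Stdlib Require Import FunctionalExtensionality.
Set Implicit Arguments. Unset Strict Implicit. Unset Printing Implicit Defensive.

Definition c0 : X := @Ordinal 4 0 isT.
Definition c1 : X := @Ordinal 4 1 isT.
Definition c2 : X := @Ordinal 4 2 isT.
Definition c3 : X := @Ordinal 4 3 isT.

Lemma ec0 : x0 = c0. Proof. by apply: val_inj; rewrite /= inordK. Qed.
Lemma ec1 : x1 = c1. Proof. by apply: val_inj; rewrite /= inordK. Qed.
Lemma ec2 : x2 = c2. Proof. by apply: val_inj; rewrite /= inordK. Qed.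
Lemma ec3 : x3 = c3. Proof. by apply: val_inj; rewrite /= inordK. Qed.

Lemma allX (P : X -> Prop) : P c0 -> P c1 -> P c2 -> P c3 -> forall x, P x.
Proof.
move=> H0 H1 H2 H3 [[|[|[|[|i]]]] Hi] //.
- by have -> : Ordinal Hi = c0 by apply: val_inj.
- by have -> : Ordinal Hi = c1 by apply: val_inj.
- by have -> : Ordinal Hi = c2 by apply: val_inj.
- by have -> : Ordinal Hi = c3 by apply: val_inj.
Qed.

Definition s1c (x : X) : X := match val x with 0 => c3 | 1 => c1 | 2 => c0 | _ => c2 end.
Definition s2c (x : X) : X := match val x with 0 => c1 | 1 => c3 | 2 => c2 | _ => c0 end.
Definition s3c (x : X) : X := match val x with 0 => c3 | 1 => c0 | 2 => c2 | _ => c1 end.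

Lemma s1E x : s1 x = s1c x.
Proof. rewrite permE; elim/allX: x; by apply: val_inj; rewrite /s1f /= inordK. Qed.
Lemma s2E x : s2 x = s2c x.
Proof. rewrite permE; elim/allX: x; by apply: val_inj; rewrite /s2f /= inordK. Qed.
Lemma s3E x : s3 x = s3c x.
Proof.
have H : s2 (s3c x) = x by rewrite s2E; elim/allX: x.
by rewrite -{1}H /s3 permK.
Qed.

Lemma rootedE r x v : rooted r (x :: v) = r x :: v. Proof. by []. Qed.
Lemma bmapE x v : bmap (x :: v) = x :: (if x == c0 then bmap v else rooted (sel x) v).
Proof. by rewrite /= ec0. Qed.
Lemma selE x : sel x = if x == c1 then s1 else if x == c2 then s2 else s3.
Proof. by rewrite /sel ec1 ec2. Qed.

Lemma bmap0 v : bmap (c0 :: v) = c0 :: bmap v. Proof. by rewrite bmapE eqxx. Qed.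
Lemma bmap1 v : bmap (c1 :: v) = c1 :: rooted s1 v. Proof. by rewrite bmapE selE. Qed.
Lemma bmap2 v : bmap (c2 :: v) = c2 :: rooted s2 v. Proof. by rewrite bmapE selE. Qed.
Lemma bmap3 v : bmap (c3 :: v) = c3 :: rooted s3 v. Proof. by rewrite bmapE selE. Qed.

Lemma g2 v : gmap (c2 :: v) = c3 :: rooted s3 (bmap v).
Proof.
rewrite /gmap /comp_r [rooted s3 (c2 :: _)]rootedE s3E -[s3c c2]/c2.
rewrite [rooted s1 _]rootedE s1E -[s1c c2]/c0 bmap0.
by rewrite [rooted s3 (c0 :: _)]rootedE s3E -[s3c c0]/c3 bmap3.
Qed.
Lemma g3 v : gmap (c3 :: v) = c0 :: bmap (rooted s1 v).
Proof.
rewrite /gmap /comp_r [rooted s3 (c3 :: _)]rootedE s3E -[s3c c3]/c1.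
rewrite [rooted s1 (c1 :: _)]rootedE s1E -[s1c c1]/c1 bmap1.
by rewrite [rooted s3 (c1 :: _)]rootedE s3E -[s3c c1]/c0 bmap0.
Qed.
Lemma g0 v : gmap (c0 :: v) = c2 :: rooted s2 (rooted s2 v).
Proof.
rewrite /gmap /comp_r [rooted s3 (c0 :: _)]rootedE s3E -[s3c c0]/c3.
rewrite [rooted s1 (c3 :: _)]rootedE s1E -[s1c c3]/c2 bmap2.
by rewrite [rooted s3 (c2 :: _)]rootedE s3E -[s3c c2]/c2 bmap2.
Qed.
Lemma s22 v : rooted s2 (rooted s2 v) = rooted s3 v.
Proof. case: v => // x v; rewrite !rootedE !s2E s3E; congr (_ :: _); by elim/allX: x. Qed.

Lemma gcube v : iter 3 gmap (c2 :: v) = c2 :: rooted s3 (bmap (rooted s1 (rooted s3 (bmap v)))).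
Proof. by rewrite /= g2 g3 g0 s22. Qed.

Lemma gm m v : exists v', iter (3 * m) gmap (c2 :: v) = c2 :: v' /\ bmap v' = iter m gmap (bmap v).
Proof.
elim: m => [|m [v' [H1 H2]]]; first by exists v.
exists (rooted s3 (bmap (rooted s1 (rooted s3 (bmap v'))))); split.
  by rewrite mulnS iterD H1 gcube.
by rewrite iterS -H2.
Qed.

Fixpoint binv (w : seq X) : seq X :=
  match w with
  | [::] => [::]
  | x :: v => x :: (if x == c0 then binv v else rooted (sel x)^-1 v)
  end.

Lemma binvK w : bmap (binv w) = w.
Proof.
elim: w => // x v IH; rewrite [binv _]/= bmapE; case: eqP => // _.
  by rewrite IH.
by case: v {IH} => // y v; rewrite !rootedE permKV.
Qed.

Lemma gc0 m : iter (3 * m) gmap [:: c0] = [:: c0].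
Proof. elim: m => // m IH; by rewrite mulnS iterD IH /= g0 g2 g3. Qed.

Lemma part2 (n : nat) : 0 < n -> exists w : seq X, iter n gmap w <> w.
Proof.
elim/ltn_ind: n => n IH n0.
have Hdiv := divn_eq n 3; set m := n %/ 3 in Hdiv.
have : n %% 3 < 3 by rewrite ltn_mod.
case En : (n %% 3) => [|[|[|//]]] _; rewrite En in Hdiv; rewrite Hdiv.
- have m0 : 0 < m by move: n0; rewrite Hdiv addn0 muln_gt0 andbT.
  have mn : m < n by rewrite Hdiv addn0 -{1}(muln1 m) ltn_mul2l m0.
  have [w Hw] := IH m mn m0.
  have [v' [H1 H2]] := gm m (binv w).
  exists (c2 :: binv w); rewrite addn0 mulnC H1 => [[E]].
  by apply: Hw; rewrite -{1}(binvK w) -H2 E binvK.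
- exists [:: c0]; rewrite addn1 mulnC iterS gc0 /= g0 => [[]].
  by [].
- exists [:: c0]; rewrite addn2 mulnC !iterS gc0 /= g0 g2 => [[]].
  by [].
Qed.

Definition rootedf (f : X -> X) : tmap := fun w => if w is x :: v then f x :: v else [::].
Definition hsel (y z : X) : X := if y == c1 then s1c z else if y == c2 then s2c z else s3c z.
Definition selc (sq : bool) (y x : X) : X := if sq then hsel y (hsel y x) else hsel y x.
Definition bk (sq : bool) : tmap := if sq then comp_r bmap bmap else bmap.

Lemma selH y x : sel y x = hsel y x.
Proof.
rewrite selE /hsel; case: ifP => _; first exact: s1E.
by case: ifP => _; [exact: s2E|exact: s3E].
Qed.

Lemma rootedH y v : rooted (sel y) v = rootedf (hsel y) v.
Proof. by case: v => // x v; rewrite rootedE selH. Qed.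

Lemma drop1 (y : X) t : drop (size [:: y]) (y :: t) = t. Proof. by case: t. Qed.

Lemma sec_eq sq y : y != c0 -> section (bk sq) [:: y] = rootedf (selc sq y).
Proof.
move=> Hy; apply: functional_extensionality => v; rewrite /section /bk.
case: sq.
  rewrite /comp_r [bmap (y :: v)]bmapE (negbTE Hy) bmapE (negbTE Hy) drop1.
  by rewrite !rootedH; case: v.
by rewrite bmapE (negbTE Hy) drop1 rootedH.
Qed.

Lemma comp_rooted g h : comp_r (rootedf g) (rootedf h) = rootedf (fun x => h (g x)).
Proof. by apply: functional_extensionality; case. Qed.

Lemma fold_eq sq f s g : (forall i, i \in s -> iter i f c0 != c0) ->
  foldl (fun acc i => comp_r acc (section (bk sq) [:: iter i f c0])) (rootedf g) s
  = rootedf (foldl (fun acc y x => selc sq y (acc x)) g [seq iter i f c0 | i <- s]).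
Proof.
elim: s g => // i s IH g H /=.
rewrite sec_eq; last by apply: H; rewrite inE eqxx.
rewrite comp_rooted IH // => j Hj; apply: H; by rewrite inE Hj orbT.
Qed.

Definition ordk (f : X -> X) : nat :=
  if iter 1 f c0 == c0 then 1 else if iter 2 f c0 == c0 then 2
  else if iter 3 f c0 == c0 then 3 else 4.

Definition Lc (sq : bool) (f : X -> X) : X -> X :=
  foldl (fun acc y x => selc sq y (acc x)) id [seq iter i f c0 | i <- iota 1 (ordk f).-1].

Lemma ne_iter f i : 0 < i < fingraph.order f c0 -> (iter i f c0 == c0) = false.
Proof.
move=> /andP[i0 io]; apply/negbTE/eqP => E.
have := findex_iter io; rewrite E findex0 => Ei; by rewrite -Ei in i0.
Qed.

Lemma order_ordk f : injective f -> fingraph.order f c0 = ordk f.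
Proof.
move=> fi.
have o4 : fingraph.order f c0 <= 4 by exact: leq_trans (max_card _) (eq_leq (card_ord 4)).
have o0 := fingraph.order_gt0 f c0.
have io := iter_order fi c0.
have ne := @ne_iter f.
rewrite /ordk; move: o4 o0 io ne; case: (fingraph.order f c0) => [|[|[|[|[|o]]]]] // _ _ io ne.
- by rewrite io eqxx.
- by rewrite (ne 1 isT) io eqxx.
- by rewrite (ne 1 isT) (ne 2 isT) io eqxx.
- by rewrite (ne 1 isT) (ne 2 isT) (ne 3 isT).
Qed.

Lemma lambdaE b' a : lambda b' a =
  foldl (fun acc i => comp_r acc (section b' [:: iter i (letter_map a) x0])) id
    (iota 1 (fingraph.order (letter_map a) x0).-1).
Proof. by []. Qed.

Lemma lam_eq sq f : injective f -> lambda (bk sq) (rootedf f) = rootedf (Lc sq f).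
Proof.
move=> fi; rewrite lambdaE -[letter_map (rootedf f)]/f ec0.
have Hid : (id : tmap) = rootedf id by apply: functional_extensionality; case.
have Hne : forall i, i \in iota 1 (fingraph.order f c0).-1 -> iter i f c0 != c0.
  move=> i; rewrite mem_iota add1n (prednK (fingraph.order_gt0 f c0)) => Hi.
  by rewrite ne_iter.
by rewrite Hid fold_eq // (order_ordk fi).
Qed.

Lemma hsel_inj y : injective (hsel y).
Proof.
rewrite /hsel; case: (y == c1).
  by move=> a b; rewrite -!s1E; apply: perm_inj.
case: (y == c2).
  by move=> a b; rewrite -!s2E; apply: perm_inj.
by move=> a b; rewrite -!s3E; apply: perm_inj.
Qed.

Lemma Lc_inj sq f : injective (Lc sq f).
Proof.
rewrite /Lc; suff H : forall s (g : X -> X), injective g ->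
  injective (foldl (fun acc y x => selc sq y (acc x)) g s) by apply: H.
elim=> // y s IH g gi /=.
apply: IH => a b /=; case: sq => [/hsel_inj/hsel_inj|/hsel_inj]; exact: gi.
Qed.

Lemma iter_eq sq n f : injective f ->
  iter n (lambda (bk sq)) (rootedf f) = rootedf (iter n (Lc sq) f).
Proof.
move=> fi; elim: n => // n IH; rewrite !iterS IH lam_eq //.
by case: n {IH} => [|n]; [exact: fi| rewrite iterS; exact: Lc_inj].
Qed.

Definition tab (o0 o1 o2 o3 : X) (x : X) : X := nth o0 [:: o0; o1; o2; o3] (val x).
Definition cs : seq X := [:: c0; c1; c2; c3].
Definition chk (sq : bool) : bool :=
  all (fun o0 => all (fun o1 => all (fun o2 => all (fun o3 =>
    uniq [:: o0; o1; o2; o3] ==>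
    all (fun x => iter 10 (Lc sq) (tab o0 o1 o2 o3) x == x) cs) cs) cs) cs) cs.

Lemma chkT sq : chk sq.
Proof. by case: sq; vm_compute. Qed.

Lemma memcs x : x \in cs. Proof. by elim/allX: x. Qed.

Lemma part1 (b' : tmap) : b' = bmap \/ b' = comp_r bmap bmap ->
     forall a : {perm X}, a \in A ->
       exists n : nat, forall w : seq X, iter n (lambda b') (rooted a) w = w.
Proof.
move=> Hb a _.
have [sq ->] : exists sq, b' = bk sq by case: Hb => ->; [exists false|exists true].
exists 10 => w.
have Ha : (a : X -> X) = tab (a c0) (a c1) (a c2) (a c3).
  by apply: functional_extensionality; elim/allX.
have Hu : uniq [:: a c0; a c1; a c2; a c3].
  by have := map_inj_uniq (@perm_inj _ a) cs; rewrite /= => ->.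
move/allP: (chkT sq) => /(_ _ (memcs (a c0))) /allP /(_ _ (memcs (a c1)))
  /allP /(_ _ (memcs (a c2))) /allP /(_ _ (memcs (a c3))) /implyP /(_ Hu) /allP H.
rewrite (_ : rooted a = rootedf a) // iter_eq; last exact: perm_inj.
rewrite Ha; case: w => // x v.
have /eqP E := H x (memcs x); exact: (f_equal (fun y => y :: v) E).
Qed.

Theorem mainTheorem13 :
  (forall b' : tmap, b' = bmap \/ b' = comp_r bmap bmap ->
     forall a : {perm X}, a \in A ->
       exists n : nat, forall w : seq X, iter n (lambda b') (rooted a) w = w)
  /\
  (forall n : nat, 0 < n -> exists w : seq X, iter n gmap w <> w).
Proof. split; [exact: part1 | exact: part2]. Qed.
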